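(* Let $\ell$ be a prime, $L$ a finite extension of $\mathbb Q_\ell$, $\tau$ a field automorphism of $L$ of order $2$, $L^\tau$ its fixed field, $\lambda$ a uniformizer of $L^\tau$, and $v_\lambda$ the valuation on $\overline{\mathbb Q_\ell}$ normalized by $v_\lambda(\lambda)=1$. Let $C=\{x\in\mathcal O_L^\times: x\tau(x)=1\}$ and, for $n\ge0$, $C(n)=\{x\in C: v_\lambda(x-1)\ge n\}$. If $\ell\neq2$, then for every $n\ge1$ the quotient $C(n)/C(n+1)$ has order $|\mathcal O_{L^\tau}/\lambda\mathcal O_{L^\tau}|$. If $\ell=2$, the same holds for every $n>v_\lambda(2)$. *)

(* Defs.v *)
From HB Require Import structures.
From mathcomp Require Import all_boot all_order all_algebra.
From mathcomp Require Import reals.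
Set Implicit Arguments. Unset Strict Implicit. Unset Printing Implicit Defensive.
Import Order.TTheory GRing.Theory Num.Theory.
Local Open Scope ring_scope.

(* A finite extension L of Q_l is represented as a field L together with its
   (unique) absolute value |.| : L -> R extending the l-adic absolute value of Q,
   L being complete and finite-dimensional over the closure of Q in L
   (this closure is Q_l, the completion of Q for the l-adic absolute value). *)

Section Defs.
Variables (R : realType) (L : fieldType) (absv : L -> R).

Definition padic_abs (l : nat) (q : rat) : R :=
  if q == 0 then 0
  else (l%:R ^+ logn l (absz (denq q))) / (l%:R ^+ logn l (absz (numq q))).

Definition is_abs_value : Prop :=
  [/\ forall x, 0 <= absv x,
      forall x, absv x = 0 <-> x = 0,
      forall x y, absv (x * y) = absv x * absv y
    & forall x y, absv (x + y) <= Num.max (absv x) (absv y)].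

Definition abs_complete : Prop :=
  forall u : nat -> L,
    (forall eps : R, 0 < eps -> exists N : nat,
        forall m k, (N <= m)%N -> (N <= k)%N -> absv (u m - u k) < eps) ->
    exists y : L, forall eps : R, 0 < eps -> exists N : nat,
        forall m, (N <= m)%N -> absv (u m - y) < eps.

Definition in_Ql (y : L) : Prop :=
  forall eps : R, 0 < eps -> exists q : rat, absv (y - ratr q) < eps.

Definition finite_over_Ql : Prop :=
  exists (n : nat) (b : 'I_n -> L), forall x : L,
    exists c : 'I_n -> L, (forall i, in_Ql (c i)) /\ x = \sum_(i < n) c i * b i.

Definition finite_ext_Ql (l : nat) : Prop :=
  [/\ is_abs_value, abs_complete,
      forall q : rat, absv (ratr q) = padic_abs l q
    & finite_over_Ql].

Definition order2_aut (tau : L -> L) : Prop :=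
  [/\ forall x y, tau (x + y) = tau x + tau y,
      forall x y, tau (x * y) = tau x * tau y,
      tau 1 = 1,
      forall x, tau (tau x) = x
    & exists x, tau x <> x].

Definition O_fix (tau : L -> L) (x : L) : Prop := tau x = x /\ absv x <= 1.

Definition uniformizer (tau : L -> L) (lam : L) : Prop :=
  [/\ O_fix tau lam, lam <> 0, absv lam < 1
    & forall y, O_fix tau y -> absv y < 1 -> exists z, O_fix tau z /\ y = lam * z].

Definition Cgrp (tau : L -> L) (x : L) : Prop := absv x = 1 /\ x * tau x = 1.

(* C(n) = {x in C : v_lam(x - 1) >= n}, i.e. |x - 1| <= |lam|^n *)
Definition Cfilt (tau : L -> L) (lam : L) (n : nat) (x : L) : Prop :=
  Cgrp tau x /\ absv (x - 1) <= absv lam ^+ n.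

End Defs.

Definition quot_card (T : Type) (A : T -> Prop) (r : T -> T -> Prop) (k : nat) : Prop :=
  exists f : 'I_k -> T,
    [/\ forall i, A (f i),
        forall i j, r (f i) (f j) -> i = j
      & forall x, A x -> exists i, r x (f i)].

(* Main.v *)
Require Import Defs.
From HB Require Import structures.
From mathcomp Require Import all_boot all_order all_algebra.
From mathcomp Require Import reals boolp.
From mathcomp Require Import ring lra zify.
Set Implicit Arguments. Unset Strict Implicit. Unset Printing Implicit Defensive.
Import Order.TTheory GRing.Theory Num.Theory.
Local Open Scope ring_scope.

Section Ratr.
Variable (L : fieldType).
Hypothesis Hc : forall n : nat, (n.+1)%:R != 0 :> L.

Lemma intrL_neq0 (z : int) : z != 0 -> z%:~R != 0 :> L.
Proof.
case: z => [[|n]|n] // _; first by rewrite -pmulrn Hc.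
by rewrite NegzE mulrNz oppr_eq0 -pmulrn Hc.
Qed.

Lemma ratr_frac (a b : int) : b != 0 ->
  ratr (a%:~R / b%:~R : rat) = a%:~R / b%:~R :> L.
Proof.
move=> b0; set q := (a%:~R / b%:~R : rat).
have e : (numq q)%:~R / (denq q)%:~R = a%:~R / b%:~R :> rat by rewrite divq_num_den.
move/eqP: e; rewrite eqr_div ?intq_eq0 ?denq_neq0 // -!intrM => /eqP /intr_inj e.
rewrite /ratr; apply/eqP; rewrite eqr_div ?intrL_neq0 ?denq_neq0 //.
by rewrite -!intrM e.
Qed.

Lemma ratr_num_den (q : rat) : q = (numq q)%:~R / (denq q)%:~R.
Proof. by rewrite divq_num_den. Qed.

Lemma ratrD p r : ratr (p + r) = ratr p + ratr r :> L.
Proof.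
have hp := denq_neq0 p; have hr := denq_neq0 r.
have -> : p + r = ((numq p * denq r + numq r * denq p)%:~R / (denq p * denq r)%:~R : rat).
  rewrite {1}(ratr_num_den p) {1}(ratr_num_den r) !intrD !intrM.
  by field; rewrite !intq_eq0 hp hr.
rewrite ratr_frac ?mulf_neq0 // /ratr !intrD !intrM.
by field; rewrite !intrL_neq0.
Qed.
Lemma ratrN p : ratr (- p) = - ratr p :> L.
Proof.
have hp := denq_neq0 p.
have -> : - p = ((- numq p)%:~R / (denq p)%:~R : rat).
  by rewrite {1}(ratr_num_den p) intrN mulNr.
by rewrite ratr_frac // /ratr intrN mulNr.
Qed.
Lemma ratrB p r : ratr (p - r) = ratr p - ratr r :> L.
Proof. by rewrite ratrD ratrN. Qed.
Lemma ratrM p r : ratr (p * r) = ratr p * ratr r :> L.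
Proof.
have hp := denq_neq0 p; have hr := denq_neq0 r.
have -> : p * r = ((numq p * numq r)%:~R / (denq p * denq r)%:~R : rat).
  rewrite {1}(ratr_num_den p) {1}(ratr_num_den r) !intrM.
  by field; rewrite !intq_eq0 hp hr.
rewrite ratr_frac ?mulf_neq0 // /ratr !intrM.
by field; rewrite !intrL_neq0.
Qed.
Lemma ratrV p : ratr (p^-1) = (ratr p)^-1 :> L.
Proof.
have [->|p0] := eqVneq p 0; first by rewrite invr0 /ratr mul0r invr0.
have hp := denq_neq0 p; have np : numq p != 0 by rewrite numq_eq0.
have -> : p^-1 = ((denq p)%:~R / (numq p)%:~R : rat).
  rewrite {1}(ratr_num_den p) invf_div //.
by rewrite ratr_frac // /ratr invf_div.
Qed.
Lemma ratr_intL (z : int) : ratr (z%:~R) = z%:~R :> L.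
Proof. by rewrite ratr_int. Qed.
End Ratr.

Section Abs.
Variables (R : realType) (L : fieldType) (absv : L -> R).
Hypothesis H : is_abs_value absv.
Hypothesis Hc : forall n : nat, (n.+1)%:R != 0 :> L.

Lemma av_ge0 x : 0 <= absv x. Proof. by case: H. Qed.
Lemma av_eq0 x : absv x = 0 <-> x = 0. Proof. by case: H. Qed.
Lemma avM x y : absv (x * y) = absv x * absv y. Proof. by case: H. Qed.
Lemma avD x y : absv (x + y) <= Num.max (absv x) (absv y). Proof. by case: H. Qed.
Lemma av0 : absv 0 = 0. Proof. by apply/av_eq0. Qed.
Lemma av_neq0 x : x != 0 -> absv x != 0.
Proof. by move=> /eqP hx; apply/eqP => /av_eq0. Qed.
Lemma av_gt0 x : x != 0 -> 0 < absv x.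
Proof. by move=> hx; rewrite lt_def av_neq0 // av_ge0. Qed.
Lemma av1 : absv 1 = 1.
Proof.
have h : absv 1 * absv 1 = absv 1 * 1 by rewrite -avM !mulr1.
by apply: (mulfI (av_neq0 (oner_neq0 L))).
Qed.
Lemma avN1 : absv (-1) = 1.
Proof.
have h : absv (-1) ^+ 2 = 1 by rewrite expr2 -avM mulrNN mulr1 av1.
move/eqP: h; rewrite sqrf_eq1 => /orP[/eqP //|/eqP h].
by have := av_ge0 (-1); rewrite h; lra.
Qed.
Lemma avN x : absv (- x) = absv x.
Proof. by rewrite -mulN1r avM avN1 mul1r. Qed.
Lemma avB x y : absv (x - y) = absv (y - x).
Proof. by rewrite -opprB avN. Qed.
Lemma avV x : absv (x^-1) = (absv x)^-1.
Proof.
have [->|x0] := eqVneq x 0; first by rewrite invr0 av0 invr0.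
have h : absv x * absv x^-1 = 1 by rewrite -avM mulfV // av1.
by apply: (mulfI (av_neq0 x0)); rewrite h mulfV // av_neq0.
Qed.
Lemma avf x y : absv (x / y) = absv x / absv y.
Proof. by rewrite avM avV. Qed.
Lemma avX x n : absv (x ^+ n) = absv x ^+ n.
Proof. by elim: n => [|n IH]; rewrite ?expr0 ?av1 // !exprS avM IH. Qed.
Lemma avD_le x y e : absv x <= e -> absv y <= e -> absv (x + y) <= e.
Proof. by move=> hx hy; apply: le_trans (avD x y) _; rewrite ge_max hx hy. Qed.
Lemma avD_lt x y e : absv x < e -> absv y < e -> absv (x + y) < e.
Proof. by move=> hx hy; apply: le_lt_trans (avD x y) _; rewrite gt_max hx hy. Qed.
Lemma avB_le x y e : absv x <= e -> absv y <= e -> absv (x - y) <= e.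
Proof. by move=> hx hy; apply: avD_le; rewrite ?avN. Qed.
Lemma avB_lt x y e : absv x < e -> absv y < e -> absv (x - y) < e.
Proof. by move=> hx hy; apply: avD_lt; rewrite ?avN. Qed.
Lemma avD_eq x y : absv y < absv x -> absv (x + y) = absv x.
Proof.
move=> hyx; apply/eqP; rewrite eq_le; apply/andP; split.
  by apply: le_trans (avD x y) _; rewrite ge_max lexx ltW.
have e : x = (x + y) - y by rewrite addrK.
have := avD (x + y) (- y); rewrite -e avN.
rewrite le_max => /orP[//|h]; by have := lt_le_trans hyx h; rewrite ltxx.
Qed.
Lemma av_sum_le (I : Type) (r : seq I) (P : pred I) (F : I -> L) e :
  0 <= e -> (forall i, P i -> absv (F i) <= e) -> absv (\sum_(i <- r | P i) F i) <= e.
Proof.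
move=> e0 hF; elim/big_ind: _ => //; first by rewrite av0.
by move=> x y; apply: avD_le.
Qed.
Lemma av_sum_lt (I : Type) (r : seq I) (P : pred I) (F : I -> L) e :
  0 < e -> (forall i, P i -> absv (F i) < e) -> absv (\sum_(i <- r | P i) F i) < e.
Proof.
move=> e0 hF; elim/big_ind: _ => //; first by rewrite av0.
by move=> x y; apply: avD_lt.
Qed.

Lemma K_rat q : in_Ql absv (ratr q).
Proof. by move=> e e0; exists q; rewrite subrr av0. Qed.
Lemma K_sub x y : in_Ql absv x -> in_Ql absv y -> in_Ql absv (x - y).
Proof.
move=> hx hy e e0; have [p hp] := hx e e0; have [r hr] := hy e e0.
exists (p - r); rewrite ratrB //.
have -> : x - y - (ratr p - ratr r) = (x - ratr p) - (y - ratr r) by ring.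
exact: avB_lt.
Qed.
Lemma K_mul x y : in_Ql absv x -> in_Ql absv y -> in_Ql absv (x * y).
Proof.
move=> hx hy e e0.
set A := absv x + 1; set B := absv y + 1.
have A0 : 0 < A by rewrite /A; have := av_ge0 x; lra.
have B0 : 0 < B by rewrite /B; have := av_ge0 y; lra.
set d := Num.min 1 (e / (A + B)).
have d0 : 0 < d by rewrite lt_min ltr01 divr_gt0 // addr_gt0.
have d1 : d <= 1 by rewrite ge_min lexx.
have dAB : d * (A + B) <= e.
  rewrite -ler_pdivlMr; last exact: addr_gt0.
  by rewrite /d ge_min lexx orbT.
have [p hp] := hx d d0; have [r hr] := hy d d0.
exists (p * r); rewrite ratrM //.
have -> : x * y - ratr p * ratr r = x * (y - ratr r) + ratr r * (x - ratr p) by ring.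
have hrB : absv (ratr r : L) <= B.
  have -> : (ratr r : L) = y - (y - ratr r) by ring.
  apply: le_trans (avD _ _) _; rewrite avN ge_max /B; apply/andP; split; first lra.
  have := av_ge0 y; lra.
apply: avD_lt; rewrite avM.
  apply: (@le_lt_trans _ _ (A * absv (y - ratr r))).
    by apply: ler_wpM2r; rewrite ?av_ge0 // /A; lra.
  apply: (@lt_le_trans _ _ (A * d)); first by rewrite ltr_pM2l.
  have := av_ge0 x; have := av_ge0 y; nra.
apply: (@le_lt_trans _ _ (B * absv (x - ratr p))).
  by apply: ler_wpM2r; rewrite ?av_ge0.
apply: (@lt_le_trans _ _ (B * d)); first by rewrite ltr_pM2l.
have := av_ge0 x; have := av_ge0 y; nra.
Qed.
Lemma K_inv x : in_Ql absv x -> in_Ql absv (x^-1).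
Proof.
move=> hx; have [x0'|x0] := eqVneq x 0; first by rewrite x0' invr0 -x0'.
move=> e e0; have ax := av_gt0 x0.
set d := Num.min (absv x) (e * absv x ^+ 2).
have d0 : 0 < d by rewrite lt_min ax mulr_gt0 // exprn_gt0.
have [q hq] := hx d d0.
have hqx : absv (ratr q : L) = absv x.
  have -> : (ratr q : L) = x + (ratr q - x) by ring.
  by rewrite avD_eq // avB (lt_le_trans hq) // ge_min lexx.
have q0 : (ratr q : L) != 0 by apply/eqP => h; move: hqx; rewrite h av0 => h'; move: ax; rewrite -h' ltxx.
exists q^-1; rewrite ratrV //.
have -> : x^-1 - (ratr q)^-1 = (ratr q - x) / (x * ratr q) by field; apply/andP.
rewrite avf avM hqx avB ltr_pdivrMr ?mulr_gt0 //.
by apply: (lt_le_trans hq); rewrite ge_min -expr2 lexx orbT.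
Qed.

End Abs.

Section Sub.
Variables (R : realType) (L : fieldType) (absv : L -> R).

Definition Khyp := is_abs_value absv /\ forall n : nat, (n.+1)%:R != 0 :> L.
Definition Kpred : {pred L} := fun x => `[< Khyp -> in_Ql absv x >].

Lemma Kpred_closed : divring_closed Kpred.
Proof.
split.
- apply/asboolP => -[h hc]; have := K_rat h 1; by rewrite /ratr divr1.
- move=> x y /asboolP hx /asboolP hy; apply/asboolP => hh.
  by case: hh (hh) => h hc hh; apply: K_sub => //; [apply: hx|apply: hy].
- move=> x y /asboolP hx /asboolP hy; apply/asboolP => hh.
  case: hh (hh) => h hc hh; apply: K_mul => //; first by apply: hx.
  by apply: K_inv => //; apply: hy.
Qed.

HB.instance Definition _ := GRing.isDivringClosed.Build L Kpred Kpred_closed.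

Record Ksub := KSub { kval : L; kvalP : kval \in Kpred }.
HB.instance Definition _ := [isSub for kval].
HB.instance Definition _ := [Choice of Ksub by <:].
HB.instance Definition _ := [SubChoice_isSubIntegralDomain of Ksub by <:].
HB.instance Definition _ := [SubIntegralDomain_isSubField of Ksub by <:].

Hypothesis hK : Khyp.

Lemma in_Kpred x : in_Ql absv x -> x \in Kpred.
Proof. by move=> h; apply/asboolP. Qed.

Lemma kvalM (x y : Ksub) : kval (x * y) = kval x * kval y.
Proof. exact: (rmorphM (val : Ksub -> L)). Qed.
Lemma kval0 : kval (0 : Ksub) = 0.
Proof. exact: (raddf0 (val : Ksub -> L)). Qed.
Lemma kval_sum (I : finType) (F : I -> Ksub) : kval (\sum_i F i) = \sum_i kval (F i).
Proof. exact: (raddf_sum (val : Ksub -> L)). Qed.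

Lemma K_dep (N : nat) (b : 'I_N -> L) (z : 'I_N.+1 -> L) :
  (forall i, exists c : 'I_N -> L, (forall j, in_Ql absv (c j)) /\ z i = \sum_j c j * b j) ->
  exists d : 'I_N.+1 -> L, [/\ forall i, in_Ql absv (d i), exists i, d i != 0
     & \sum_i d i * z i = 0].
Proof.
move=> hz; have [c hc] := choice hz.
pose A : 'M[Ksub]_(N.+1, N) := \matrix_(i, j) insubd 0 (c i j).
have vA i j : kval (A i j) = c i j by rewrite mxE insubdK //; apply: in_Kpred; case: (hc i).
have kr : (0 < \rank (kermx A))%N.
  by rewrite mxrank_ker subn_gt0 ltnS rank_leq_col.
have : kermx A != 0 by rewrite -mxrank_eq0 -lt0n.
move=> k0.
have [i0 [j0 hij]] : exists i j, kermx A i j != 0.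
  case: (pselect (exists i j, kermx A i j != 0)) => // hn; exfalso; apply: (negP k0); apply/eqP/matrixP => i j; rewrite [X in _ = X]mxE.
  apply/eqP; case: eqP => // h; case: hn; exists i, j; exact/eqP.
pose v := row i0 (kermx A).
have vA0 : v *m A = 0 by rewrite /v -row_mul mulmx_ker row0.
exists (fun i => kval (v 0 i)); split.
- move=> i; have := kvalP (v 0 i) => /asboolP; apply; exact: hK.
- by exists j0; rewrite /v mxE; move: hij; apply: contra => /eqP h; apply/eqP/val_inj.
have -> : \sum_i kval (v 0 i) * z i = \sum_j kval ((v *m A) 0 j) * b j.
  under eq_bigr => i _ do rewrite (proj2 (hc i)) mulr_sumr.
  rewrite exchange_big /=; apply: eq_bigr => j _.
  rewrite !mxE kval_sum mulr_suml; apply: eq_bigr => i _.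
  by rewrite kvalM vA mulrA.
by apply: big1 => j _; rewrite vA0 mxE kval0 mul0r.
Qed.
End Sub.

Section Padic.
Variables (R : realType) (L : fieldType) (absv : L -> R) (l : nat).
Hypothesis H : is_abs_value absv.
Hypothesis Hq : forall q : rat, absv (ratr q) = padic_abs R l q.
Hypothesis Hl : prime l.

Lemma padic_pos q : q != 0 -> 0 < padic_abs R l q.
Proof.
move=> q0; rewrite /padic_abs (negbTE q0) divr_gt0 // exprn_gt0 // ltr0n prime_gt0 //.
Qed.

Lemma Hc : forall n : nat, (n.+1)%:R != 0 :> L.
Proof.
move=> n; apply/eqP => h.
have := Hq (n.+1)%:R; rewrite ratr_nat h av0 // => h'.
by have := @padic_pos (n.+1)%:R; rewrite pnatr_eq0 -h' ltxx => /(_ isT).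
Qed.

Lemma av_nat n : absv (n%:R : L) <= 1.
Proof.
elim: n => [|n IH]; first by rewrite av0 // ler01.
by rewrite mulrS; apply: avD_le => //; rewrite av1.
Qed.
Lemma av_int (z : int) : absv (z%:~R : L) <= 1.
Proof. by case: z => n; rewrite ?NegzE ?mulrNz ?avN // -pmulrn av_nat. Qed.

Lemma av_l : absv (l%:R : L) = (l%:R)^-1.
Proof.
have := Hq l%:R; rewrite ratr_nat => ->; rewrite /padic_abs.
have l0 : (l%:R : rat) != 0 by rewrite pnatr_eq0 -lt0n prime_gt0.
rewrite (negbTE l0) (_ : (l%:R : rat) = (l%:Z)%:~R) ?pmulrn // numq_int denq_int /=.
by rewrite logn1 expr0 logn_prime // eqxx expr1 div1r.
Qed.
Lemma av_l_lt1 : absv (l%:R : L) < 1.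
Proof. by rewrite av_l invf_lt1 ?ltr1n ?prime_gt1 // ltr0n prime_gt0. Qed.
Lemma av_l_pos : 0 < absv (l%:R : L).
Proof. by rewrite av_l invr_gt0 ltr0n prime_gt0. Qed.

Lemma av_dvd (z : int) : (l %| `|z|)%N -> absv (z%:~R : L) < 1.
Proof.
move=> h; have hd : (l%:Z %| z)%Z by rewrite dvdzE.
rewrite -(divzK hd) intrM avM //.
apply: (@le_lt_trans _ _ (absv (l%:Z%:~R : L))); last exact: av_l_lt1.
rewrite -[X in _ <= X]mul1r ler_wpM2r ?av_ge0 ?av_int //.
Qed.

Lemma bezout_l (z : int) : ~~ (l %| `|z|)%N -> exists u v : int, u * l%:Z + v * z = 1.
Proof.
move=> h; have [u [v e]] := Bezoutz l%:Z z.
exists u, v; rewrite e; apply/eqP; rewrite -/(coprimez _ _) coprimezE /=.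
by rewrite prime_coprime.
Qed.

Lemma av_ndvd (z : int) : ~~ (l %| `|z|)%N -> absv (z%:~R : L) = 1.
Proof.
move=> h; have [u [v e]] := bezout_l h.
have e' : (v * z)%:~R = 1 - (u * l%:Z)%:~R :> L by apply/eqP; rewrite eq_sym subr_eq -intrD addrC e.

have h1 : absv ((v * z)%:~R : L) = 1.
  rewrite e' (avD_eq H) ?(av1 H) // (avN H) intrM (avM H).
  apply: (@le_lt_trans _ _ (absv (l%:Z%:~R : L))); last exact: av_l_lt1.
  by rewrite -[X in _ <= X]mul1r ler_wpM2r ?(av_ge0 H) ?av_int.
move: h1; rewrite intrM avM // => h1.
have := av_int v; have := av_int z; have := av_ge0 H (v%:~R : L); have := av_ge0 H (z%:~R : L).
nra.
Qed.

Lemma av_2 : l != 2%N -> absv (2%:R : L) = 1.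
Proof.
move=> l2; rewrite -[2%:R]/((2%:Z)%:~R : L) av_ndvd //=.
by rewrite dvdn_prime2 // eq_sym.
Qed.
Lemma av_2_pos : 0 < absv (2%:R : L).
Proof. by apply: av_gt0 => //; apply: (Hc 1). Qed.
Lemma av_2_le1 : absv (2%:R : L) <= 1.
Proof. exact: av_nat. Qed.

Lemma ratQ (q : rat) : absv (ratr q : L) <= 1 -> exists a : int, absv (ratr q - a%:~R : L) < 1.
Proof.
move=> hq; set n := numq q; set d := denq q.
have ed : ratr q = n%:~R / d%:~R :> L by [].
have d0 : (d%:~R : L) != 0 by apply: intrL_neq0; [exact: Hc| exact: denq_neq0].
have hd : ~~ (l %| `|d|)%N.
  apply/negP => hld.
  have hn : ~~ (l %| `|n|)%N.
    apply/negP => hln; have := coprime_num_den q; rewrite -/n -/d => cop.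
    have : (l %| gcdn `|n| `|d|)%N by rewrite dvdn_gcd hln hld.
    rewrite (eqP cop) dvdn1 => /eqP l1.
    by move: Hl; rewrite l1.
  move: hq; rewrite ed avf // av_ndvd // ler_pdivrMr ?mul1r ?av_gt0 //.
  by rewrite leNgt av_dvd.
have [u [v e]] := bezout_l hd.
exists (n * v); rewrite ed.
have -> : n%:~R / d%:~R - (n * v)%:~R = n%:~R * (u * l%:Z)%:~R / d%:~R :> L.
  have e2 : (u * l%:Z)%:~R = 1 - (v * d)%:~R :> L by apply/eqP; rewrite eq_sym subr_eq -intrD e.

  rewrite e2 !intrM; field.
  by [].
rewrite avf // av_ndvd // divr1 !avM // intrM avM //.
apply: (@le_lt_trans _ _ (absv (l%:Z%:~R : L))); last exact: av_l_lt1.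
rewrite mulrA -[X in _ <= X]mul1r ler_wpM2r ?(av_ge0 H) //.
by have := ler_pM (av_ge0 H _) (av_ge0 H _) (av_int n) (av_int u); rewrite mulr1.
Qed.
End Padic.

Lemma argmax_ex (R : realType) n (F : 'I_n.+1 -> R) : exists i0, forall i, F i <= F i0.
Proof.
case: (@arg_maxP _ R _ ord0 xpredT F isT) => i0 _ h; exists i0 => i; exact: h.
Qed.

Section Res.
Variables (R : realType) (L : fieldType) (absv : L -> R) (l : nat).
Hypothesis H : is_abs_value absv.
Hypothesis Hq : forall q : rat, absv (ratr q) = padic_abs R l q.
Hypothesis Hl : prime l.

Lemma av_intmul (a : int) (x : L) : absv x <= 1 -> absv (a%:~R * x) <= 1.
Proof.
move=> hx; rewrite (avM H); have := av_int H a; have := av_ge0 H (a%:~R : L);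
have := av_ge0 H x; nra.
Qed.

Lemma indep (z : nat -> L) (hz : forall i, absv (z i) <= 1) j :
  (forall i, (i < j)%N -> forall a : nat -> int,
      ~ absv (z i - \sum_(k < i) (a k)%:~R * z k) < 1) ->
  forall a : nat -> int, absv (\sum_(k < j) (a k)%:~R * z k) < 1 ->
  forall i, (i < j)%N -> (l %| `|a i|)%N.
Proof.
elim: j => [|j IH] hind a hs i hi //.
rewrite big_ord_recr /= in hs.
set S := \sum_(k < j) _ in hs.
have hj : (l %| `|a j|)%N.
  apply/negPn/negP => nd; have [u [v e]] := bezout_l Hl nd.
  apply: (hind j (ltnSn j) (fun k => - (v * a k))).
  have -> : z j - \sum_(k < j) (- (v * a k))%:~R * z k
          = v%:~R * (S + (a j)%:~R * z j) + (u * l%:Z)%:~R * z j.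
    have e' : (u * l%:Z)%:~R = 1 - (v * a j)%:~R :> L.
      by apply/eqP; rewrite eq_sym subr_eq -intrD e.
    rewrite e' /S; under eq_bigr => k _ do rewrite intrN intrM mulNr -mulrA.
    rewrite sumrN -mulr_sumr intrM; ring.
  apply: (avD_lt H).
    rewrite (avM H); have := av_int H v; have := av_ge0 H (v%:~R : L);
    have := av_ge0 H (S + (a j)%:~R * z j); nra.
  rewrite intrM -mulrA (avM H) (avM H).
  have hl := av_dvd H Hq Hl (dvdnn l : (l %| `|l%:Z|)%N).
  have hl0 := av_ge0 H ((l%:Z)%:~R : L).
  have h2 : absv ((l%:Z)%:~R : L) * absv (z j) <= absv ((l%:Z)%:~R : L).
    have := hz j; have := av_ge0 H (z j); nra.
  have := av_int H u; have := av_ge0 H (u%:~R : L); have := mulr_ge0 hl0 (av_ge0 H (z j)); nra.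
rewrite ltnS leq_eqVlt in hi; case/orP: hi => [/eqP ei|hi]; first by rewrite ei.
have hS : absv S < 1.
  have -> : S = (S + (a j)%:~R * z j) - (a j)%:~R * z j by rewrite addrK.
  apply: (avB_lt H) => //.
  rewrite (avM H); have := av_dvd H Hq Hl hj; have := hz j; have := av_ge0 H ((a j)%:~R : L);
  have := av_ge0 H (z j); nra.
apply: (IH _ a) => //.
by move=> i' hi'; apply: hind; rewrite ltnW.
Qed.

Lemma av_cong (x y : int) : (x %% l%:Z)%Z = (y %% l%:Z)%Z -> absv ((x - y)%:~R : L) < 1.
Proof.
move=> e; have -> : x - y = (divz x l%:Z - divz y l%:Z) * l%:Z.
  by rewrite [in LHS](divz_eq x l%:Z) [in LHS](divz_eq y l%:Z) e; ring.
apply: av_dvd => //; rewrite abszM dvdn_mull //.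
Qed.

Lemma pigeon (z : nat -> L) (hz : forall i, absv (z i) <= 1) j M (f : 'I_M -> L) :
  (forall p p', absv (f p - f p') < 1 -> p = p') -> (l ^ j < M)%N ->
  exists p, forall a : nat -> int, ~ absv (f p - \sum_(k < j) (a k)%:~R * z k) < 1.
Proof.
move=> hf hM; apply: contrapT => hn.
have hall : forall p, exists a : nat -> int, absv (f p - \sum_(k < j) (a k)%:~R * z k) < 1.
  move=> p; apply: contrapT => hp; apply: hn; exists p => a ha; apply: hp; by exists a.
have [g hg] := choice hall.
have l0 : (0 < l)%N := prime_gt0 Hl.
have rlt : forall x : int, (absz (x %% l%:Z)%Z < l)%N.
  move=> x; have := ltz_pmod x (_ : 0 < l%:Z); have := modz_ge0 x (_ : l%:Z != 0); lia.
pose phi (p : 'I_M) : {ffun 'I_j -> 'I_l} := [ffun k : 'I_j => Ordinal (rlt (g p k))].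
have phi_inj : injective phi.
  move=> p p' e; apply: hf.
  have ek : forall k : 'I_j, (g p k %% l%:Z)%Z = (g p' k %% l%:Z)%Z.
    move=> k; have := congr1 (fun F : {ffun 'I_j -> 'I_l} => nat_of_ord (F k)) e; rewrite /phi !ffunE /=.
    have := modz_ge0 (g p k) (_ : l%:Z != 0); have := modz_ge0 (g p' k) (_ : l%:Z != 0); lia.
  have -> : f p - f p' = (f p - \sum_(k < j) (g p k)%:~R * z k)
       - (f p' - \sum_(k < j) (g p' k)%:~R * z k)
       + \sum_(k < j) ((g p k - g p' k)%:~R * z k).
    under [X in _ = _ + X]eq_bigr => k _ do rewrite intrD intrN mulrDl mulNr.
    rewrite sumrB; ring.
  apply: (avD_lt H); first by apply: (avB_lt H); apply: hg.
  apply: (av_sum_lt H) => // k _; rewrite (avM H).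
  have := av_cong (ek k); have := hz k; have := av_ge0 H ((g p k - g p' k)%:~R : L);
  have := av_ge0 H (z k); nra.
have := @leq_card _ _ phi phi_inj; rewrite card_ffun !card_ord.
by rewrite leqNgt hM.
Qed.
End Res.

Section Bound.
Variables (R : realType) (L : fieldType) (absv : L -> R) (l : nat).
Hypothesis H : is_abs_value absv.
Hypothesis Hq : forall q : rat, absv (ratr q) = padic_abs R l q.
Hypothesis Hl : prime l.

Lemma bound N (b : 'I_N -> L)
  (hspan : forall x, exists c : 'I_N -> L, (forall i, in_Ql absv (c i)) /\ x = \sum_i c i * b i)
  M (f : 'I_M -> L) (hf1 : forall p, absv (f p) <= 1)
  (hf : forall p p', absv (f p - f p') < 1 -> p = p') : (M <= l ^ N)%N.
Proof.
have Hc' := Hc H Hq Hl.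
rewrite leqNgt; apply/negP => hM.
have hz : forall j, (j <= N.+1)%N -> exists z : nat -> L, (forall i, absv (z i) <= 1) /\
    (forall i, (i < j)%N -> forall a : nat -> int,
      ~ absv (z i - \sum_(k < i) (a k)%:~R * z k) < 1).
  elim => [|j IH] hj.
    by exists (fun _ => 0); split => // i; rewrite (av0 H) ler01.
  have [z [hz1 hind]] := IH (ltnW hj).
  have hMj : (l ^ j < M)%N.
    apply: leq_ltn_trans hM; rewrite leq_exp2l ?prime_gt1 //.
  have [p hp] := pigeon H Hq Hl hz1 hf hMj.
  exists (fun i => if i == j then f p else z i); split.
    by move=> i; case: eqP => _; [exact: hf1| exact: hz1].
  move=> i hi a; rewrite ltnS leq_eqVlt in hi; case/orP: hi => [/eqP ei|hi].
    rewrite ei eqxx; under eq_bigr => k _ do rewrite (ltn_eqF (ltn_ord k)).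
    exact: hp.
  rewrite (ltn_eqF hi); under eq_bigr => k _ do rewrite (ltn_eqF (ltn_trans (ltn_ord k) hi)).
  exact: hind.
have [z [hz1 hind]] := hz N.+1 (leqnn _).
have [d [dK [i1 di1] dz]] := @K_dep _ _ _ (conj H Hc') N b (fun i : 'I_N.+1 => z i)
   (fun i => hspan (z i)).
have [i0 hi0] := argmax_ex (fun i => absv (d i)).
have d0 : d i0 != 0.
  apply/negP => /eqP e; have := hi0 i1; rewrite e (av0 H) => h.
  by have := av_gt0 H di1; rewrite lt_def => /andP[/eqP h1 h2]; apply: h1; apply/eqP; rewrite eq_le h h2.
pose d' i := d i / d i0.
have d'K i : in_Ql absv (d' i) by apply: K_mul => //; apply: K_inv.
have d'1 i : absv (d' i) <= 1.
  by rewrite /d' (avf H) ler_pdivrMr ?mul1r ?av_gt0.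
have d'z : \sum_i d' i * z i = 0.
  by rewrite /d'; under eq_bigr => i _ do rewrite mulrAC; rewrite -mulr_suml dz mul0r.
have hA : forall i, exists a : int, absv (d' i - a%:~R) < 1.
  move=> i; have [q hq] := d'K i 1 ltr01.
  have hq1 : absv (ratr q : L) <= 1.
    have -> : (ratr q : L) = d' i - (d' i - ratr q) by ring.
    by apply: (avB_le H) => //; apply: ltW.
  have [a ha] := ratQ H Hq Hl hq1.
  exists a; have -> : d' i - a%:~R = (d' i - ratr q) + (ratr q - a%:~R) by ring.
  exact: (avD_lt H).
have [A hA'] := choice hA.
pose aa (k : nat) : int := if (k < N.+1)%N then A (inord k) else 0.
have hs : absv (\sum_(k < N.+1) (aa k)%:~R * z k) < 1.
  have -> : \sum_(k < N.+1) (aa k)%:~R * z k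
          = \sum_(k < N.+1) ((A k)%:~R - d' k) * z k + \sum_i d' i * z i.
    rewrite -big_split /=; apply: eq_bigr => k _.
    by rewrite /aa ltn_ord inord_val; ring.
  rewrite d'z addr0; apply: (av_sum_lt H) => // k _.
  rewrite (avM H) (avB H); have := hA' k; have := hz1 k;
  have := av_ge0 H (d' k - (A k)%:~R); have := av_ge0 H (z k); nra.
have := indep H Hq Hl hz1 hind hs (ltn_ord i0).
rewrite /aa ltn_ord inord_val => hdvd.
have h1 := av_dvd H Hq Hl hdvd.
have h2 := hA' i0; rewrite /d' divff // in h2.
have : absv (1 : L) < 1.
  have -> : (1 : L) = (A i0)%:~R - ((A i0)%:~R - 1) by ring.
  by apply: (avB_lt H) => //; rewrite (avB H).
by rewrite (av1 H) ltxx.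
Qed.
End Bound.

Section Quot.
Variables (R : realType) (L : fieldType) (absv : L -> R) (l : nat) (tau : L -> L) (lam : L).
Hypothesis H : is_abs_value absv.
Hypothesis Hq : forall q : rat, absv (ratr q) = padic_abs R l q.
Hypothesis Hl : prime l.
Hypothesis Hfin : finite_over_Ql absv.
Hypothesis Htau : order2_aut tau.
Hypothesis Hlam : uniformizer absv tau lam.

Lemma tauD x y : tau (x + y) = tau x + tau y. Proof. by case: Htau. Qed.
Lemma tauM x y : tau (x * y) = tau x * tau y. Proof. by case: Htau. Qed.
Lemma tau1 : tau 1 = 1. Proof. by case: Htau. Qed.
Lemma tauK x : tau (tau x) = x. Proof. by case: Htau. Qed.
Lemma tau0 : tau 0 = 0.
Proof. by apply: (@addrI _ (tau 0)); rewrite -tauD !addr0. Qed.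
Lemma tauN x : tau (- x) = - tau x.
Proof. by apply: (@addrI _ (tau x)); rewrite -tauD !subrr tau0. Qed.
Lemma tauB x y : tau (x - y) = tau x - tau y.
Proof. by rewrite tauD tauN. Qed.
Lemma tauV x : tau (x^-1) = (tau x)^-1.
Proof.
have [->|x0] := eqVneq x 0; first by rewrite invr0 tau0 invr0.
have e : tau x * tau (x^-1) = 1 by rewrite -tauM mulfV // tau1.
have tx0 : tau x != 0 by apply/eqP => h; move: e; rewrite h mul0r => /eqP; rewrite eq_sym oner_eq0.
by apply: (mulfI tx0); rewrite e mulfV.
Qed.
Lemma tauf x y : tau (x / y) = tau x / tau y.
Proof. by rewrite tauM tauV. Qed.

Definition relO x y := exists z, O_fix absv tau z /\ x - y = lam * z.

Lemma O_fix0 : O_fix absv tau 0.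
Proof. by split; rewrite ?tau0 // (av0 H) ler01. Qed.
Lemma O_fixB x y : O_fix absv tau x -> O_fix absv tau y -> O_fix absv tau (x - y).
Proof. by move=> [hx ax] [hy ay]; split; [rewrite tauB hx hy| apply: (avB_le H)]. Qed.

Lemma relO_sym x y : relO x y -> relO y x.
Proof.
move=> [z [hz e]]; exists (- z); split; first by rewrite -sub0r; apply: O_fixB => //; exact: O_fix0.
by rewrite mulrN -e opprB.
Qed.

Lemma relO_small x y : O_fix absv tau x -> O_fix absv tau y -> absv (x - y) < 1 -> relO x y.
Proof.
move=> hx hy h; case: Hlam => _ _ _ hu.
have [z [hz e]] := hu (x - y) (O_fixB hx hy) h; by exists z.
Qed.

Lemma O_bound : exists B, forall M (f : 'I_M -> L), (forall i, O_fix absv tau (f i)) ->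
  (forall i j, relO (f i) (f j) -> i = j) -> (M <= B)%N.
Proof.
case: Hfin => N [b hb]; exists (l ^ N)%N => M f hf hinj.
apply: (bound H Hq Hl hb (f := f)); first by move=> p; case: (hf p).
by move=> p p' h; apply: hinj; apply: relO_small.
Qed.

Lemma O_quot : exists k, quot_card (O_fix absv tau) relO k.
Proof.
have [B hB] := O_bound.
pose P (M : nat) : bool := `[< exists f : 'I_M -> L, (forall i, O_fix absv tau (f i)) /\
   (forall i j, relO (f i) (f j) -> i = j) >].
have exP : exists M, P M.
  exists 0%N; apply/asboolP; exists (fun _ => 0); split; first by move=> _; exact: O_fix0.
  by case.
have ubP : forall M, P M -> (M <= B)%N.
  by move=> M /asboolP [f [hf hi]]; exact: hB hf hi.
case: (ex_maxnP exP ubP) => k /asboolP [f [hf hi]] hmax.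
exists k, f; split => // x hx.
apply: contrapT => hn.
have hn' : forall i, ~ relO x (f i) by move=> i hr; apply: hn; exists i.
pose g (i : 'I_k.+1) : L := if unlift ord_max i is Some j then f j else x.
have : P k.+1.
  apply/asboolP; exists g; split.
    by move=> i; rewrite /g; case: unliftP.
  move=> i j; rewrite /g; case: unliftP => [i' ->|->]; case: unliftP => [j' ->|->] //.
  - by move=> /hi ->.
  - by move=> /relO_sym /hn'.
  - by move=> /hn'.
by move/hmax; rewrite ltnn.
Qed.
End Quot.

Lemma bernoulli (R : realType) (h : R) N : 0 <= h -> 1 + N%:R * h <= (1 + h) ^+ N.
Proof.
move=> h0; elim: N => [|N IH]; first by rewrite mul0r addr0 expr0.
rewrite exprS -natr1.
have : 0 <= N%:R * h by rewrite mulr_ge0.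
have : 0 <= 1 + h by lra.
nra.
Qed.

Lemma pow_small (R : realType) (q e : R) : 0 < q -> q < 1 -> 0 < e -> exists N, q ^+ N < e.
Proof.
move=> q0 q1 e0.
set h := q^-1 - 1.
have h0 : 0 < h by rewrite /h subr_gt0 invf_gt1.
have x0 : 0 <= (e * h)^-1 by rewrite invr_ge0 mulr_ge0 // ltW.
exists (Num.Def.archi_bound ((e * h)^-1)).
set N := Num.Def.archi_bound _.
have hN := archi_boundP x0; rewrite -/N in hN.
have hb := bernoulli N (ltW h0).
have e1 : 1 + h = q^-1 by rewrite /h; ring.
rewrite e1 in hb.
have hNh : 1 < N%:R * (e * h).
  by rewrite -ltr_pdivrMr ?mulr_gt0 // div1r.
have qN0 : 0 < q ^+ N by rewrite exprn_gt0.
have AB : q ^+ N * (q^-1) ^+ N = 1 by rewrite -exprMn mulfV ?gt_eqF // expr1n.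
have eB : 1 < e * (q^-1) ^+ N.
  have : 0 <= N%:R * h by rewrite mulr_ge0 // ltW.
  move: hNh hb; rewrite mulrCA => hNh hb hh; nra.
nra.
Qed.

Section Cay.
Variables (R : realType) (L : fieldType) (absv : L -> R) (l : nat) (tau : L -> L) (lam : L) (n : nat)
  (delta : L).
Hypothesis H : is_abs_value absv.
Hypothesis Hq : forall q : rat, absv (ratr q) = padic_abs R l q.
Hypothesis Hl : prime l.
Hypothesis Htau : order2_aut tau.
Hypothesis Hlam : uniformizer absv tau lam.
Hypothesis Hn : absv lam ^+ n < absv (2%:R : L).
Hypothesis hd : tau delta = - delta.
Hypothesis hd0 : delta != 0.

Local Notation c := (absv (2%:R : L)).
Local Notation q := (absv lam).
Local Notation D := (absv delta).

Lemma c0 : 0 < c. Proof. exact: av_2_pos H Hq Hl. Qed.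
Lemma c1 : c <= 1. Proof. exact: av_nat H 2. Qed.
Lemma two0 : (2%:R : L) != 0. Proof. exact: (Hc H Hq Hl 1). Qed.
Lemma q0 : 0 < q. Proof. by case: Hlam => _ l0 _ _; apply: av_gt0 => //; apply/eqP. Qed.
Lemma q1 : q < 1. Proof. by case: Hlam. Qed.
Lemma D0 : 0 < D. Proof. exact: av_gt0. Qed.

Definition Cay s := (1 + s * delta) / (1 - s * delta).

Lemma one_add u : absv u < 1 -> absv (1 + u) = 1.
Proof. by move=> h; rewrite (avD_eq H) (av1 H). Qed.
Lemma one_sub u : absv u < 1 -> absv (1 - u) = 1.
Proof. by move=> h; rewrite one_add // (avN H). Qed.
Lemma av1_neq0 v : absv v = 1 -> v != 0.
Proof. by move=> h; apply/eqP => e; move: h; rewrite e (av0 H) => /eqP; rewrite eq_sym oner_eq0. Qed.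

Lemma Cay_Cgrp s : tau s = s -> absv (s * delta) < 1 -> Cgrp absv tau (Cay s).
Proof.
move=> ts hs; have n1 := av1_neq0 (one_add hs); have n2 := av1_neq0 (one_sub hs).
split; first by rewrite /Cay (avf H) one_add // one_sub // divr1.
rewrite /Cay (tauf Htau) (tauD Htau) (tauB Htau) (tau1 Htau) (tauM Htau) ts hd mulrN opprK.
by field; rewrite n1 n2.
Qed.

Lemma Cay_sub1 s : absv (s * delta) < 1 -> absv (Cay s - 1) = c * absv (s * delta).
Proof.
move=> hs; have n2 := av1_neq0 (one_sub hs).
have -> : Cay s - 1 = 2%:R * (s * delta) / (1 - s * delta) by rewrite /Cay; field.
by rewrite (avf H) (avM H) one_sub // divr1.
Qed.

Lemma Cay_div s t : absv (s * delta) < 1 -> absv (t * delta) < 1 ->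
  absv (Cay s / Cay t - 1) = c * absv ((s - t) * delta).
Proof.
move=> hs ht; have n2 := av1_neq0 (one_sub hs).
have n3 := av1_neq0 (one_sub ht); have n4 := av1_neq0 (one_add ht).
have -> : Cay s / Cay t - 1 = 2%:R * ((s - t) * delta) / ((1 - s * delta) * (1 + t * delta)).
  by rewrite /Cay; field; rewrite n2 n3 n4.
by rewrite (avf H) !(avM H) one_sub // one_add // mulr1 divr1.
Qed.

Lemma Cgrp_div x y : Cgrp absv tau x -> Cgrp absv tau y -> Cgrp absv tau (x / y).
Proof.
move=> [ax ex] [ay ey]; split; first by rewrite (avf H) ax ay divr1.
by rewrite (tauf Htau) mulf_div ex ey divr1.
Qed.

Lemma Cay_inv x : Cgrp absv tau x -> absv (x - 1) < c ->
  exists s, [/\ tau s = s, c * absv (s * delta) = absv (x - 1) & Cay s = x].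
Proof.
move=> [ax ex] hx.
have x0 := av1_neq0 ax.
have hx1 : absv (x + 1) = c.
  have -> : x + 1 = 2%:R + (x - 1) by ring.
  by rewrite (avD_eq H).
have x10 : x + 1 != 0 by apply/eqP => e; move: hx1; rewrite e (av0 H) => h; have := c0; rewrite -h ltxx.
have tx : tau x = x^-1 by rewrite -[tau x]mul1r -(mulVf x0) -mulrA ex mulr1.
exists ((x - 1) / ((x + 1) * delta)); split.
- rewrite (tauf Htau) (tauM Htau) (tauB Htau) (tauD Htau) (tau1 Htau) tx hd.
  by field; rewrite x0 hd0 x10 oppr_eq0 hd0.
- have -> : (x - 1) / ((x + 1) * delta) * delta = (x - 1) / (x + 1) by field; rewrite hd0 x10.
  rewrite (avf H) hx1 mulrC divfK //; exact: (lt0r_neq0 c0).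
- rewrite /Cay; have t2 := two0.
  field; rewrite hd0 x10 /=.
  have -> : x + 1 - (x - 1) = 2%:R by ring.
  by rewrite t2.
Qed.

Lemma discrete y : tau y = y -> absv y * q < 1 -> absv y <= 1.
Proof.
move=> ty hy; rewrite leNgt; apply/negP => y1.
have y0 : y != 0 by apply/eqP => e; move: y1; rewrite e (av0 H) ltr10.
have w1 : absv (y^-1) < 1 by rewrite (avV H) invf_lt1 //; lra.
case: Hlam => _ _ _ hu.
have o : O_fix absv tau (y^-1) by split; [rewrite (tauV Htau) ty | exact: ltW].
have [z [[tz az] e]] := hu (y^-1) o w1.
have : absv (y^-1) <= q by rewrite e (avM H) -[X in _ <= X]mulr1 ler_wpM2l ?(av_ge0 H).
rewrite (avV H) => h.
have ay0 : 0 < absv y by lra.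
have := ler_wpM2l (ltW ay0) h; rewrite mulfV ?gt_eqF // => h2.
by move: hy; rewrite ltNge h2.
Qed.

Definition Mb := q ^+ n / (c * D).

Lemma MbP : 0 < Mb.
Proof. by rewrite /Mb divr_gt0 ?exprn_gt0 ?q0 // mulr_gt0 ?c0 ?D0. Qed.
Lemma MbE : c * (Mb * D) = q ^+ n.
Proof. rewrite /Mb; field; rewrite !gt_eqF ?c0 ?D0 //. Qed.

Lemma small s : absv s <= Mb -> c * absv (s * delta) <= q ^+ n /\ absv (s * delta) < 1.
Proof.
move=> hs; have h1 : c * absv (s * delta) <= q ^+ n.
  rewrite -MbE (avM H); apply: ler_wpM2l; first exact: ltW c0.
  by apply: ler_wpM2r => //; apply: ltW D0.
split => //; have := c0; have := Hn; have := av_ge0 H (s * delta); nra.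
Qed.

Lemma C_quot k (t0 : L) : tau t0 = t0 ->
  q * Mb < absv t0 -> absv t0 <= Mb ->
  quot_card (O_fix absv tau) (relO absv tau lam) k ->
  quot_card (Cfilt absv tau lam n) (fun x y => Cfilt absv tau lam n.+1 (x / y)) k.
Proof.
move=> tt0 hlo hhi [f [hf hinj hsurj]].
have HM := MbP; have Hq0 := q0; have Hq1 := q1; have HD := D0; have Hc0 := c0.
have T0 : 0 < absv t0 by have := mulr_gt0 Hq0 HM; lra.
have t00 : t0 != 0 by apply/eqP => e; move: T0; rewrite e (av0 H) ltxx.
have fs i : tau (t0 * f i) = t0 * f i by rewrite (tauM Htau) tt0; case: (hf i) => -> _.
have fb i : absv (t0 * f i) <= Mb.
  rewrite (avM H); apply: le_trans hhi; rewrite -[X in _ <= X]mulr1 ler_wpM2l ?(av_ge0 H) //.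
  by case: (hf i).
have MbE' := MbE.
exists (fun i => Cay (t0 * f i)); split.
- move=> i; have [h1 h2] := small (fb i); split; first exact: Cay_Cgrp.
  by rewrite Cay_sub1.
- move=> i j [_]; have [_ hi] := small (fb i); have [_ hj] := small (fb j).
  rewrite Cay_div // -mulrBr (avM H) (avM H) exprS => h.
  apply: hinj; apply: (relO_small H Htau Hlam); [exact: hf | exact: hf |].
  rewrite -MbE' in h.
  have := av_ge0 H (f i - f j); move: h; set u := absv (f i - f j); set T := absv t0 => h hu0.
  have hcd : 0 < c * D by rewrite mulr_gt0.
  have : T * u * (c * D) <= (q * Mb) * (c * D) by move: h; nra.
  rewrite ler_pM2r // => h'.
  rewrite ltNge; apply/negP => u1; have := ler_wpM2l (ltW T0) u1; rewrite mulr1 => h3.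
  move: hlo h' h3; rewrite /T => a b c'; clear -a b c'; lra.
- move=> x [hC hx1].
  have hx : absv (x - 1) < c by apply: le_lt_trans hx1 Hn.
  have [s [ts cs xs]] := Cay_inv hC hx.
  have sd1 : absv (s * delta) < 1 by have := av_ge0 H (s * delta); nra.
  have sM : absv s <= Mb.
    have : c * (absv s * D) <= c * (Mb * D) by rewrite MbE' -(avM H) cs.
    by rewrite ler_pM2l // ler_pM2r.
  set y := s / t0.
  have ty : tau y = y by rewrite /y (tauf Htau) ts tt0.
  have y1 : absv y <= 1.
    apply: discrete => //; rewrite /y (avf H) mulrAC ltr_pdivrMr // mul1r.
    have := av_ge0 H s; nra.
  have [i hi] := hsurj y (conj ty y1).
  case: hi => z [[tz az] ez].
  exists i; rewrite -xs; split.
    apply: Cgrp_div; first by rewrite xs.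
    by apply: Cay_Cgrp; [exact: fs | exact: (small (fb i)).2].
  have es : s - t0 * f i = t0 * (lam * z) by rewrite -ez /y; field.
  rewrite Cay_div //; last exact: (small (fb i)).2.
  rewrite es !(avM H) exprS -MbE'.
  have := av_ge0 H t0; have := av_ge0 H z; have := av_ge0 H lam.
  move: az hhi; set T := absv t0; set Z := absv z => az hhi h1 h2 h3.
  have hTZ : T * (q * Z) <= Mb * q.
    have : q * Z <= q by rewrite -[X in _ <= X]mulr1 ler_wpM2l.
    nra.
  have hcd : 0 <= c * D by rewrite mulr_ge0 // ltW.
  nra.
Qed.
End Cay.

Lemma t0_ex (R : realType) (q M : R) : 0 < q -> q < 1 -> 0 < M ->
  exists a b : nat, q * M < q ^+ a / q ^+ b /\ q ^+ a / q ^+ b <= M.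
Proof.
move=> q0 q1 M0.
have Mi : 0 < M^-1 by rewrite invr_gt0.
have [b hb] := pow_small q0 q1 Mi.
have qb0 : 0 < q ^+ b by rewrite exprn_gt0.
have hbM : q ^+ b * M < 1 by rewrite -ltr_pdivlMr // div1r.
have e0 : 0 < q ^+ b * M by rewrite mulr_gt0.
have exP : exists a, (q ^+ a <= q ^+ b * M) by have [a ha] := pow_small q0 q1 e0; exists a; exact: ltW.
case: (ex_minnP exP) => a ha hmin.
exists a, b; split; last by rewrite ler_pdivrMr // mulrC.
rewrite ltr_pdivlMr //.
case: a ha hmin => [|a] ha hmin.
  rewrite expr0; nra.
have : ~~ (q ^+ a <= q ^+ b * M).
  by apply/negP => /hmin; rewrite ltnn.
rewrite -ltNge exprS => h; nra.
Qed.

Lemma tauX (L : fieldType) (tau : L -> L) x m : order2_aut tau -> tau (x ^+ m) = tau x ^+ m.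
Proof.
move=> ht; elim: m => [|m IH]; first by rewrite !expr0 (tau1 ht).
by rewrite !exprS (tauM ht) IH.
Qed.

Theorem lemma6p2 (R : realType) (L : fieldType) (absv : L -> R) (l : nat)
    (tau : L -> L) (lam : L) (n : nat) :
  prime l ->
  finite_ext_Ql absv l ->
  order2_aut tau ->
  uniformizer absv tau lam ->
  ((l != 2)%N /\ (1 <= n)%N \/ l = 2%N /\ absv lam ^+ n < absv (2%:R : L)) ->
  exists k : nat,
    quot_card (Cfilt absv tau lam n)
              (fun x y => Cfilt absv tau lam n.+1 (x / y)) k /\
    quot_card (O_fix absv tau)
              (fun x y => exists z, O_fix absv tau z /\ x - y = lam * z) k.
Proof.
move=> Hl [H _ Hq Hfin] Htau Hlam Hn.
have q0 := q0 H Hlam; have q1 := q1 Hlam.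
have Hn' : absv lam ^+ n < absv (2%:R : L).
  case: Hn => [[l2 n1]|[_ //]].
  rewrite (av_2 H Hq Hl l2) exprn_ilt1 ?ltW //; by rewrite -lt0n.
have [w hw] : exists w, tau w <> w by case: Htau.
set delta := w - tau w.
have hd : tau delta = - delta by rewrite /delta (tauB Htau) (tauK Htau) opprB.
have hd0 : delta != 0 by rewrite /delta subr_eq0 eq_sym; apply/eqP.
have [k hk] := O_quot H Hq Hl Hfin Htau Hlam.
have MP := MbP n H Hq Hl Hlam hd0.
have [a [b [hlo hhi]]] := t0_ex q0 q1 MP.
exists k; split => //.
apply: (C_quot H Hq Hl Htau Hlam Hn' hd hd0 (t0 := lam ^+ a / lam ^+ b)) => //.
- by rewrite (tauf Htau) !(tauX _ _ Htau); case: Hlam => -[-> _] _ _ _.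
- by rewrite (avf H) !(avX H).
- by rewrite (avf H) !(avX H).
Qed.
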